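(* For every $T$-round DRACC instance in which every user has a $k_t$-demand valuation function, the corresponding Dd-MDP is $O(\sqrt{C W\cdot T})$-chasable (with respect to arbitrary target pricing policies).
   Context: DRACC problem: there are $N$ resources and $T$ users arriving in rounds $t=1,\dots,T$. Resource $i\in[N]$ arrives at the start of round $t_a(i)$ and departs at the end of round $t_e(i)$ ($1\le t_a(i)\le t_e(i)\le T$), with capacity $c(i)\in\mathbb{Z}_{>0}$ units on arrival. $A_t\subseteq[N]$ is the set of resources active at time $t$ (those with $t_a(i)\le t\le t_e(i)$). $C\ge\max_i c(i)$ and $W\ge\max_t|A_t|$ are known upper bounds independent of $T$. User $t$ has a valuation $v_t:2^{A_t}\to[0,1)$ with $v_t(\emptyset)=0$ and is quasi-linear. A valuation is $k_t$-demand if there are an integer $1\le k_t\le|A_t|$ and values $w_t^i\in[0,1)$ such that $v_t(A)=\max_{A'\subseteq A,|A'|\le k_t}\sum_{i\in A'}w^i_t$. In round $t$ a mechanism posts $\bm p_t\in(0,1]^{A_t}$; user $t$ receives one unit of each resource in the demand set $\hat A^{\bm p}_t=\arg\max_{A\subseteq A_t}\{v_t(A)-\sum_{i\in A}\bm p(i)\}$ (ties broken lexicographically) and pays $\hat q^{\bm p}_t=\sum_{i\in\hat A^{\bm p}_t}\bm p(i)$; $v_t$ is revealed to the mechanism after posting. The inventory vector $\bm\lambda_t\in\{0,\dots,C\}^{A_t}$ has $\bm\lambda_t(i)=c(i)$ if $t_a(i)=t$, and $\bm\lambda_{t+1}(i)=\bm\lambda_t(i)-\mathbb{1}[i\in\hat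 A^{\bm p_t}_t]$ for $i\in A_t\cap A_{t+1}$. A price vector $\bm p$ is feasible for $\bm\lambda$ if $\bm p(i)=1$ whenever $\bm\lambda(i)=0$; posted prices must be feasible. A pricing policy maps each inventory vector to a feasible price vector. Arrival/departure times, capacities and valuations are chosen by an (adaptive) adversary. Corresponding Dd-MDP: states are inventory vectors; feasible actions at a state are price vectors feasible for it; reward $f_t(s,x)=\hat q^{x}_t$; transition $g_t(s,x)=s'$ with $s'(i)=s(i)-\mathbb{1}[i\in\hat A^x_t]$ for $i\in A_{t+1}\cap A_t$ and $s'(i)=c(i)$ for $i\in A_{t+1}\setminus A_t$. A policy $\gamma$ is simulated from the true initial inventory: $s^\gamma_1=s_1$, $x^\gamma_t=\gamma(s^\gamma_t)$, $s^\gamma_{t+1}=g_t(s^\gamma_t,x^\gamma_t)$. $\sigma$-chasability: there is a (possibly randomized) chasing oracle such that for any target policy $\gamma$, any round $t_{\mathrm{init}}$ and any initial state $s_{\mathrm{init}}$ (possibly different from $s^\gamma_{t_{\mathrm{init}}}$), it outputs in each round $t\ge t_{\mathrm{init}}$ an action $\hat x(t)$ feasible for $\hat s(t)$, where $\hat s(t_{\mathrm{init}})=s_{\mathrm{init}}$, $\hat s(t)=g_{t-1}(\hat s(t-1),\hat x(t-1))$, and afterwards observes $g_t,f_t$; and for every $t_{\mathrm{final}}\ge t_{\mathrm{init}}$, $\sum_{t=t_{\mathrm{init}}}^{t_{\mathrm{final}}}f_t(s^\gamma_t,x^\gamma_t)-\sum_{t=t_{\mathrm{init}}}^{t_{\mathrm{final}}}\mathbb{E}[f_t(\hat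 s(t),\hat x(t))]\le\sigma$. *)

(* Defs.v *)
From HB Require Import structures.
From mathcomp Require Import all_boot all_order all_algebra.
From mathcomp Require Import reals.
Set Implicit Arguments. Unset Strict Implicit. Unset Printing Implicit Defensive.
Import Order.TTheory GRing.Theory Num.Theory.
Local Open Scope ring_scope.

Section DRACC.
Variable R : realType.
Variable N : nat.

(* A DRACC instance over resources 'I_N: arrival/departure times, capacities,
   and the valuation v_t of the user of round t (meaningful on subsets of A_t). *)
Record instance := Instance {
  ta : 'I_N -> nat;
  te : 'I_N -> nat;
  cap : 'I_N -> nat;
  val : nat -> {set 'I_N} -> R }.

(* Inventory vectors and price vectors are total functions on 'I_N; only the
   coordinates in the active set A_t are meaningful.  States produced by the
   dynamics are 0 outside A_t. *)
Definition state := 'I_N -> nat.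
Definition price := 'I_N -> R.

Definition act (I : instance) (t : nat) : {set 'I_N} :=
  [set i | (ta I i <= t)%N && (t <= te I i)%N].

Definition feasible (A : {set 'I_N}) (s : state) (p : price) : Prop :=
  forall i, i \in A -> 0 < p i <= 1 /\ (s i = 0%N -> p i = 1).

Definition util (I : instance) (t : nat) (p : price) (A : {set 'I_N}) : R :=
  val I t A - \sum_(i in A) p i.

Definition maximizers (I : instance) (t : nat) (p : price) : {set {set 'I_N}} :=
  [set A : {set 'I_N} | (A \subset act I t) &&
     [forall B : {set 'I_N}, (B \subset act I t) ==> (util I t p B <= util I t p A)]].

(* Lexicographic order on characteristic vectors (resource 0 most significant,
   "not in" < "in"): A <=lex B iff A = B or at the first index where they
   differ, the resource is in B but not in A. *)
Definition lexle (A B : {set 'I_N}) : bool :=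
  (A == B) || [exists i : 'I_N, [&& i \notin A, i \in B &
     [forall j : 'I_N, (j < i)%N ==> ((j \in A) == (j \in B))]]].

Definition dem (I : instance) (t : nat) (p : price) : {set 'I_N} :=
  odflt set0 [pick A in maximizers I t p |
                [forall B in maximizers I t p, lexle A B]].

(* payment = reward f_t(s, p) of the Dd-MDP *)
Definition pay (I : instance) (t : nat) (p : price) : R :=
  \sum_(i in dem I t p) p i.

Definition next (I : instance) (t : nat) (s : state) (p : price) : state :=
  fun i => if i \in act I t.+1 then
             (if i \in act I t then (s i - (i \in dem I t p))%N else cap I i)
           else 0%N.

Definition init (I : instance) : state :=
  fun i => if i \in act I 1 then cap I i else 0%N.

(* trajectory of a (time-indexed) rule started at round t0 in state s0;
   traj ... n is the state at round t0 + n *)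
Fixpoint traj (I : instance) (pol : nat -> state -> price) (t0 : nat)
  (s0 : state) (n : nat) : state :=
  match n with
  | 0 => s0
  | n'.+1 => let s := traj I pol t0 s0 n' in
             next I (t0 + n') s (pol (t0 + n') s)
  end.

Definition state_at (I : instance) (pol : nat -> state -> price) (t0 : nat)
  (s0 : state) (t : nat) : state := traj I pol t0 s0 (t - t0).

Definition k_demand (A : {set 'I_N}) (v : {set 'I_N} -> R) : Prop :=
  exists (k : nat) (w : 'I_N -> R),
    [/\ (1 <= k <= #|A|)%N,
        (forall i, i \in A -> 0 <= w i < 1) &
        forall B : {set 'I_N}, B \subset A ->
          v B = \big[Num.max/0]_(B' : {set 'I_N} | (B' \subset B) && (#|B'| <= k)%N)
                  \sum_(i in B') w i].

Definition valid_instance (C W T : nat) (I : instance) : Prop :=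
  [/\ forall i, [/\ (1 <= ta I i)%N, (ta I i <= te I i)%N & (te I i <= T)%N],
      forall i, (0 < cap I i <= C)%N,
      forall t, (#|act I t| <= W)%N,
      forall t, (1 <= t <= T)%N ->
        val I t set0 = 0 /\ (forall A : {set 'I_N}, A \subset act I t -> 0 <= val I t A < 1)
    & forall t, (1 <= t <= T)%N -> k_demand (act I t) (val I t)].

(* pricing policies: map an inventory vector (with its domain A_t) to prices *)
Definition policy := {set 'I_N} -> state -> price.

Definition feasible_policy (g : policy) : Prop :=
  forall A s, feasible A s (g A s).

Definition policy_rule (I : instance) (g : policy) : nat -> state -> price :=
  fun t s => g (act I t) s.

Definition target_reward (I : instance) (g : policy) (t : nat) : R :=
  pay I t (g (act I t) (state_at I (policy_rule I g) 1 (init I) t)).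

(* A randomized chasing oracle with random seed in Omega: given the target
   policy, t_init, s_init, the seed, the round t and the instance, it outputs
   the price of round t. *)
Definition oracle (Omega : Type) :=
  policy -> nat -> state -> Omega -> nat -> instance -> price.

(* Information available before posting in round t: the active sets and the
   capacities of arrived resources up to round t, and the transition and
   reward functions g_s, f_s of all previous rounds s < t. *)
Definition obs_eq (I I' : instance) (t : nat) : Prop :=
  [/\ forall s, (s <= t)%N -> act I s = act I' s,
      forall i, (ta I i <= t)%N -> cap I i = cap I' i &
      forall s, (s < t)%N ->
        (forall st p, next I s st p = next I' s st p) /\
        (forall p, pay I s p = pay I' s p)].

Definition online (Omega : Type) (orc : oracle Omega) : Prop :=
  forall g t0 s0 om t I I', obs_eq I I' t ->
    orc g t0 s0 om t I = orc g t0 s0 om t I'.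

Definition oracle_rule (Omega : Type) (orc : oracle Omega) (g : policy)
  (t0 : nat) (s0 : state) (om : Omega) (I : instance) : nat -> state -> price :=
  fun t _ => orc g t0 s0 om t I.

Definition oracle_state (Omega : Type) (orc : oracle Omega) (g : policy)
  (t0 : nat) (s0 : state) (om : Omega) (I : instance) (t : nat) : state :=
  state_at I (oracle_rule orc g t0 s0 om I) t0 s0 t.

Definition round_eq (I I' : instance) (t : nat) : Prop :=
  [/\ act I t = act I' t,
      forall i, ta I i = t -> cap I i = cap I' i &
      forall A : {set 'I_N}, A \subset act I t -> val I t A = val I' t A].

(* An adaptive adversary, given as the instance realized under each seed:
   the data of round t may depend on the seed only through the prices the
   oracle actually posted in rounds t0 <= s < t. *)
Definition adaptive (Omega : Type) (orc : oracle Omega) (g : policy) (t0 : nat)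
  (s0 : state) (adv : Omega -> instance) : Prop :=
  forall om om' t,
    (forall s, (t0 <= s < t)%N -> forall i, i \in act (adv om) s ->
       orc g t0 s0 om s (adv om) i = orc g t0 s0 om' s (adv om') i) ->
    round_eq (adv om) (adv om') t.

End DRACC.

(* Main.v *)
Require Import Defs.
From HB Require Import structures.
From mathcomp Require Import all_boot all_order all_algebra.
From mathcomp Require Import reals.
From mathcomp Require Import fingroup perm.
From mathcomp Require Import ring lra zify.
From Stdlib Require Import FunctionalExtensionality PeanoNat.
Set Implicit Arguments. Unset Strict Implicit. Unset Printing Implicit Defensive.
Import Order.TTheory GRing.Theory Num.Theory.
Local Open Scope ring_scope.


Section Lex.
Variable N : nat.
Implicit Types A B C : {set 'I_N}.

Lemma lexle_refl A : lexle A A.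
Proof. by rewrite /lexle eqxx. Qed.

Lemma lexle_anti A B : lexle A B -> lexle B A -> A = B.
Proof.
rewrite /lexle => /orP[/eqP//|/existsP[i /and3P[iA iB /forallP Hi]]].
move=> /orP[/eqP//|/existsP[j /and3P[jB jA /forallP Hj]]].
exfalso.
case: (ltngtP i j) => [ij|ji|/val_inj ij].
- by move: (Hj i); rewrite ij /= (negbTE iA) iB.
- by move: (Hi j); rewrite ji /= (negbTE jB) jA.
- by subst j; rewrite iB in jB.
Qed.

Lemma lexle_trans A B C : lexle A B -> lexle B C -> lexle A C.
Proof.
rewrite /lexle => /orP[/eqP->//|/existsP[i /and3P[iA iB /forallP Hi]]].
move=> /orP[/eqP<-|/existsP[j /and3P[jB jC /forallP Hj]]].
  by apply/orP; right; apply/existsP; exists i; rewrite iA iB; apply/forallP.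
apply/orP; right; apply/existsP.
case: (ltngtP i j) => [ij|ji|/val_inj ij].
- exists i; rewrite iA /=.
  move: (Hj i); rewrite ij /= => /eqP <-; rewrite iB /=.
  apply/forallP => k; apply/implyP => ki.
  move: (Hi k) (Hj k); rewrite ki (ltn_trans ki ij) /= => /eqP-> /eqP->.
  by [].
- exists j; rewrite jC /=.
  move: (Hi j); rewrite ji /= => /eqP ->; rewrite jB /=.
  apply/forallP => k; apply/implyP => kj.
  move: (Hi k) (Hj k); rewrite kj (ltn_trans kj ji) /= => /eqP-> /eqP->.
  by [].
- by subst j; rewrite iB in jB.
Qed.

Lemma lexle_total A B : lexle A B || lexle B A.
Proof.
case: (eqVneq A B) => [->|AB]; first by rewrite lexle_refl.
have [i Pi] : exists i, (i \in A) != (i \in B).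
  apply/existsP; apply: contraNT AB => /existsPn H.
  by apply/eqP/setP => x; move: (H x); rewrite negbK => /eqP.
case: (@arg_minnP _ i (fun k => (k \in A) != (k \in B)) (fun k : 'I_N => k : nat) Pi) => /= j' Pj' Hj'.
have Hag : forall k : 'I_N, (k < j')%N -> (k \in A) == (k \in B).
  move=> k kj; apply: contraTT kj => /Hj'; by rewrite -leqNgt.
case jA: (j' \in A); move: Pj'; rewrite jA.
- case jB: (j' \in B) => // _.
  apply/orP; right; apply/orP; right; apply/existsP; exists j'.
  rewrite jB jA /=; apply/forallP => k; apply/implyP => kj.
  by rewrite eq_sym; apply: Hag.
- case jB: (j' \in B) => // _.
  apply/orP; left; apply/orP; right; apply/existsP; exists j'.
  rewrite jB jA /=; apply/forallP => k; apply/implyP => kj.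
  by apply: Hag.
Qed.

Lemma lexle_remove A a : a \in A -> lexle (A :\ a) A.
Proof.
move=> aA; apply/orP; right; apply/existsP; exists a.
rewrite aA !inE eqxx /=; apply/forallP => k; apply/implyP => ka.
rewrite !inE; case: (eqVneq k a) => [kae|] //=.
by rewrite kae ltnn in ka.
Qed.

Lemma lexle_swap A a b : a \in A -> b \notin A -> (a < b)%N ->
  lexle (b |: (A :\ a)) A.
Proof.
move=> aA bA ab; apply/orP; right; apply/existsP; exists a.
have ba : (a == b) = false by apply/negbTE; apply: contraTneq ab => ->; rewrite ltnn.
rewrite aA !inE eqxx ba /=; apply/forallP => k; apply/implyP => ka.
rewrite !inE.
case: (eqVneq k a) => [kae|_]; first by rewrite kae ltnn in ka.
case: (eqVneq k b) => [kbe|_] //=.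
by move: (ltn_trans ka ab); rewrite kbe ltnn.
Qed.

Lemma lexmin_seq (s : seq {set 'I_N}) : s != [::] ->
  exists2 A, A \in s & forall B, B \in s -> lexle A B.
Proof.
elim: s => // x s IH _.
case: (eqVneq s [::]) => [->|sne].
  by exists x; rewrite ?inE // => B; rewrite inE => /eqP->; apply: lexle_refl.
have [A As HA] := IH sne.
case/orP: (lexle_total x A) => xA.
- exists x; first by rewrite inE eqxx.
  move=> B; rewrite inE => /orP[/eqP->|Bs]; first exact: lexle_refl.
  exact: lexle_trans xA (HA B Bs).
- exists A; first by rewrite inE As orbT.
  by move=> B; rewrite inE => /orP[/eqP->//|/HA].
Qed.

Lemma lexmin_set (S : {set {set 'I_N}}) : S != set0 ->
  exists2 A, A \in S & forall B, B \in S -> lexle A B.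
Proof.
move=> Sne.
have : enum S != [::].
  apply: contraNneq Sne => H; apply/eqP/setP => x; rewrite inE -mem_enum H //.
move/lexmin_seq => [A]; rewrite mem_enum => AS HA; exists A => // B BS.
by apply: HA; rewrite mem_enum.
Qed.
End Lex.


Section Dem.
Variable R : realType.
Variable N : nat.
Variable I : instance R N.
Variable t : nat.
Implicit Types (p : price R N) (A B : {set 'I_N}).

Lemma maxim_sub p A : A \in maximizers I t p -> A \subset act I t.
Proof. by rewrite inE => /andP[]. Qed.

Lemma maxim_le p A B : A \in maximizers I t p -> B \subset act I t ->
  util I t p B <= util I t p A.
Proof. by rewrite inE => /andP[_ /forallP H] BA; move: (H B); rewrite BA. Qed.

Lemma maximI p A : A \subset act I t ->
  (forall B, B \subset act I t -> util I t p B <= util I t p A) ->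
  A \in maximizers I t p.
Proof.
move=> AA H; rewrite inE AA /=; apply/forallP => B; apply/implyP; exact: H.
Qed.

Lemma maxim_ne p : maximizers I t p != set0.
Proof.
have P0 : (set0 : {set 'I_N}) \subset act I t by rewrite sub0set.
case: (@arg_maxP _ _ _ set0 (fun A : {set 'I_N} => A \subset act I t) (util I t p) P0).
move=> A AA H; apply/set0Pn; exists A; apply: maximI => // B BA; exact: H.
 
Qed.

Lemma dem_spec p : dem I t p \in maximizers I t p /\
  forall B, B \in maximizers I t p -> lexle (dem I t p) B.
Proof.
rewrite /dem; case: pickP => [A /andP[AM /forall_inP H]|H] /=; first by [].
have [A AM HA] := lexmin_set (maxim_ne p).
move: (H A); rewrite AM /=; move/negbT/negP; case.
by apply/forall_inP.
Qed.

Lemma dem_max p : dem I t p \in maximizers I t p.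
Proof. by case: (dem_spec p). Qed.

Lemma dem_lex p B : B \in maximizers I t p -> lexle (dem I t p) B.
Proof. by case: (dem_spec p) => _; apply. Qed.

Lemma dem_sub p : dem I t p \subset act I t.
Proof. exact: maxim_sub (dem_max p). Qed.

Lemma dem_unique p D : D \in maximizers I t p ->
  (forall B, B \in maximizers I t p -> lexle D B) -> dem I t p = D.
Proof.
move=> DM HD; apply: lexle_anti; first exact: dem_lex.
exact: HD (dem_max p).
Qed.

Hypothesis val0 : Defs.val I t set0 = 0.
Hypothesis valr : forall A, A \subset act I t -> 0 <= Defs.val I t A < 1.

Lemma util0 p : util I t p set0 = 0.
Proof. by rewrite /util val0 big_set0 subr0. Qed.

Lemma dem_util_ge0 p : 0 <= util I t p (dem I t p).
Proof. by rewrite -(util0 p); apply: maxim_le (dem_max p) (sub0set _). Qed.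

Lemma pay_le_val p : pay I t p <= Defs.val I t (dem I t p).
Proof. by have := dem_util_ge0 p; rewrite /util subr_ge0. Qed.

Lemma pay_lt1 p : pay I t p < 1.
Proof.
apply: le_lt_trans (pay_le_val p) _.
by case/andP: (valr (dem_sub p)).
Qed.

Lemma pay_ge0 p : (forall i, i \in act I t -> 0 <= p i) -> 0 <= pay I t p.
Proof.
move=> H; rewrite /pay; apply: sumr_ge0 => i iD.
by apply: H; apply: (subsetP (dem_sub p)).
Qed.

Lemma dem_lt1 p i : (forall i, i \in act I t -> 0 <= p i) ->
  i \in dem I t p -> p i < 1.
Proof.
move=> H iD; apply: le_lt_trans (pay_lt1 p).
rewrite /pay (big_setD1 i iD) /= lerDl; apply: sumr_ge0 => j.
rewrite !inE => /andP[_ jD]; apply: H; exact: (subsetP (dem_sub p)).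
Qed.

Lemma dem_raise p p' : (forall i, i \in act I t -> p i <= p' i) ->
  (forall i, i \in dem I t p -> p' i = p i) -> dem I t p' = dem I t p.
Proof.
move=> Hle Heq.
have Hu : forall B, B \subset act I t -> util I t p' B <= util I t p B.
  move=> B BA; rewrite /util; apply: lerB => //; apply: ler_sum => i iB.
  by apply: Hle; apply: (subsetP BA).
have HD : util I t p' (dem I t p) = util I t p (dem I t p).
  by rewrite /util; congr (_ - _); apply: eq_bigr => i iD; apply: Heq.
apply: dem_unique.
  apply: maximI; first exact: dem_sub.
  move=> B BA; rewrite HD; apply: le_trans (Hu B BA) _.
  exact: maxim_le (dem_max p) BA.
move=> B BM; apply: dem_lex; apply: maximI; first exact: maxim_sub BM.
move=> C CA; apply: le_trans (maxim_le (dem_max p) CA) _.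
rewrite -HD; apply: le_trans (maxim_le BM (dem_sub p)) _.
exact: Hu (maxim_sub BM).
Qed.

End Dem.


Section KDem.
Variable R : realType.
Variable N : nat.
Variable I : instance R N.
Variable t : nat.
Implicit Types (p : price R N) (A B : {set 'I_N}).
Hypothesis val0 : Defs.val I t set0 = 0.
Hypothesis valr : forall A, A \subset act I t -> 0 <= Defs.val I t A < 1.
Variable k : nat.
Variable w : 'I_N -> R.
Hypothesis hw : forall i, i \in act I t -> 0 <= w i < 1.
Hypothesis hval : forall B : {set 'I_N}, B \subset act I t ->
          Defs.val I t B = \big[Num.max/0]_(B' : {set 'I_N} | (B' \subset B) && (#|B'| <= k)%N)
                  \sum_(i in B') w i.

Lemma sum_w_ge0 B : B \subset act I t -> 0 <= \sum_(i in B) w i.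
Proof.
move=> BA; apply: sumr_ge0 => i iB.
by case/andP: (hw (subsetP BA i iB)).
Qed.

Lemma kval_small B : B \subset act I t -> (#|B| <= k)%N ->
  Defs.val I t B = \sum_(i in B) w i.
Proof.
move=> BA Bk; rewrite hval //; apply/eqP; rewrite eq_le; apply/andP; split.
- apply: (big_ind (fun x => x <= \sum_(i in B) w i)).
  + exact: sum_w_ge0.
  + by move=> x y hx hy; rewrite ge_max hx hy.
  + move=> B' /andP[B'B _].
    rewrite (big_setID B' (A := B)) /= (setIidPr B'B) lerDl.
    apply: sumr_ge0 => i; rewrite inE => /andP[_ iB].
    by case/andP: (hw (subsetP BA i iB)).
- rewrite (bigD1 B) /=; last by rewrite subxx Bk.
  by rewrite le_max lexx.
Qed.

Lemma kval_att B : B \subset act I t -> exists B',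
  [/\ B' \subset B, (#|B'| <= k)%N & Defs.val I t B = \sum_(i in B') w i].
Proof.
move=> BA; rewrite hval //.
apply: (big_ind (fun x => exists B', [/\ B' \subset B, (#|B'| <= k)%N & x = \sum_(i in B') w i])).
- by exists set0; rewrite sub0set cards0 big_set0.
- by move=> x y hx hy /=; have [h|h] := leP x y; [exact: hy | exact: hx].
- by move=> B' /andP[B'B B'k]; exists B'.
Qed.

Definition U p A := \sum_(i in A) (w i - p i).

Lemma util_small p A : A \subset act I t -> (#|A| <= k)%N -> util I t p A = U p A.
Proof. by move=> AA Ak; rewrite /util kval_small // /U sumrB. Qed.

Definition Ppos p := forall i, i \in act I t -> 0 < p i.

Lemma maxim_small p A : Ppos p -> A \in maximizers I t p -> (#|A| <= k)%N.
Proof.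
move=> pp AM; have AA := maxim_sub AM.
have [B' [B'A B'k hv]] := kval_att AA.
rewrite leqNgt; apply/negP => kA.
have : ~~ (A \subset B').
  apply/negP => AB; move: (subset_leq_card AB) => h.
  by move: (leq_trans h B'k); rewrite leqNgt kA.
case/subsetPn => x xA xB.
have B'act : B' \subset act I t := subset_trans B'A AA.
have := maxim_le AM B'act.
rewrite /util hv kval_small // (big_setID B' (A := A)) /= (setIidPr B'A).
rewrite (big_setD1 x (A := A :\: B')); last by rewrite inE xB xA.
rewrite /=; apply/negP; rewrite -ltNge.
have h1 : 0 < p x by exact: pp (subsetP AA x xA).
have h2 : 0 <= \sum_(i in (A :\: B') :\ x) p i.
  apply: sumr_ge0 => i; rewrite !inE => /and3P[_ _ iA].
  by apply: ltW; apply: pp (subsetP AA i iA).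
lra.
Qed.

Lemma dem_pos p x : Ppos p -> x \in dem I t p -> 0 < w x - p x.
Proof.
move=> pp xD; set D := dem I t p.
have DA : D \subset act I t := dem_sub I t p.
have Dk : (#|D| <= k)%N := maxim_small pp (dem_max I t p).
have D'A : D :\ x \subset act I t by apply: subset_trans DA; apply: subD1set.
have D'k : (#|D :\ x| <= k)%N by apply: leq_trans Dk; apply: subset_leq_card; apply: subD1set.
rewrite ltNge; apply/negP => hx.
have hU : util I t p D <= util I t p (D :\ x).
  rewrite !util_small // /U (big_setD1 x xD) /= gerDr //.
have D'M : D :\ x \in maximizers I t p.
  apply: maximI => // B BA; apply: le_trans hU.
  exact: maxim_le (dem_max I t p) BA.
have := lexle_anti (dem_lex D'M) (lexle_remove xD).
by move/setP/(_ x); rewrite !inE eqxx xD.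
Qed.

Lemma dem_GS p (Z : {set 'I_N}) :
  Ppos p ->
  (#|dem I t (fun i => if i \in Z then 1%R else p i) :\: dem I t p| <= #|dem I t p :&: Z|)%N.
Proof.
move=> pp.
set p' := (fun i => if i \in Z then (1:R) else p i).
set D := dem I t p; set D' := dem I t p'.
have pp' : Ppos p' by move=> i iA; rewrite /p'; case: (i \in Z) => //; apply: pp.
have DA : D \subset act I t := dem_sub I t p.
have D'A : D' \subset act I t := dem_sub I t p'.
have Dk : (#|D| <= k)%N := maxim_small pp (dem_max I t p).
have D'k : (#|D'| <= k)%N := maxim_small pp' (dem_max I t p').
have uD' : forall x, x \in D' -> 0 < w x - p' x by move=> x; apply: dem_pos.
have D'Z : forall x, x \in D' -> x \notin Z.
  move=> x xD'; apply/negP => xZ; move: (uD' x xD'); rewrite /p' xZ subr_gt0.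
  case/andP: (hw (subsetP D'A x xD')) => _ h h'.
  by have := lt_trans h h'; rewrite ltxx.
have p'E : forall x, x \notin Z -> p' x = p x by move=> x xZ; rewrite /p' (negbTE xZ).
have maxD : forall B, B \subset act I t -> (#|B| <= k)%N -> U p B <= U p D.
  move=> B BA Bk; rewrite -util_small // -util_small //.
  exact: maxim_le (dem_max I t p) BA.
have maxD' : forall B, B \subset act I t -> (#|B| <= k)%N -> U p' B <= U p' D'.
  move=> B BA Bk; rewrite -util_small // -util_small //.
  exact: maxim_le (dem_max I t p') BA.
have claim1 : forall y, y \in D -> y \notin Z -> y \in D'.
  move=> y yD yZ; apply/negPn/negP => yD'.
  have yA : y \in act I t := subsetP DA y yD.
  have uy : 0 < w y - p' y by rewrite p'E //; apply: dem_pos.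
  case: (ltnP #|D'| k) => hD'.
  - have BA : y |: D' \subset act I t by rewrite subUset sub1set yA D'A.
    have Bk : (#|y |: D'| <= k)%N by rewrite cardsU1 yD'.
    have := maxD' _ BA Bk; rewrite /U (big_setU1 _ yD') /=.
    by rewrite gerDr leNgt uy.
  - have : ~~ (D' \subset D).
      apply/negP => D'D.
      have : D' \subset D :\ y.
        apply/subsetP => z zD'; rewrite !inE (subsetP D'D z zD') andbT.
        by apply: contraTneq zD' => ->.
      move/subset_leq_card; move: (cardsD1 y D); rewrite yD /= => hc.
      move=> h; have : (#|D'| < #|D|)%N by rewrite hc add1n ltnS.
      by rewrite ltnNge (leq_trans Dk hD').
    case/subsetPn => x xD' xD.
    have xZ := D'Z x xD'.
    have xA : x \in act I t := subsetP D'A x xD'.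
    have yB' : y \notin D' :\ x by rewrite !inE negb_and yD' orbT.
    have xB : x \notin D :\ y by rewrite !inE negb_and xD orbT.
    have B'A : y |: (D' :\ x) \subset act I t.
      by rewrite subUset sub1set yA; apply: subset_trans D'A; apply: subD1set.
    have BA : x |: (D :\ y) \subset act I t.
      by rewrite subUset sub1set xA; apply: subset_trans DA; apply: subD1set.
    have B'k : (#|y |: (D' :\ x)| <= k)%N.
      rewrite cardsU1 yB' /= add1n; move: (cardsD1 x D'); rewrite xD' /= add1n => <-.
      exact: D'k.
    have Bk : (#|x |: (D :\ y)| <= k)%N.
      rewrite cardsU1 xB /= add1n; move: (cardsD1 y D); rewrite yD /= add1n => <-.
      exact: Dk.
    have e1 : U p' (y |: (D' :\ x)) = (w y - p' y) + U p' (D' :\ x).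
      by rewrite /U (big_setU1 _ yB').
    have e2 : U p' D' = (w x - p' x) + U p' (D' :\ x).
      by rewrite /U (big_setD1 _ xD').
    have e3 : U p (x |: (D :\ y)) = (w x - p x) + U p (D :\ y).
      by rewrite /U (big_setU1 _ xB).
    have e4 : U p D = (w y - p y) + U p (D :\ y).
      by rewrite /U (big_setD1 _ yD).
    have h1 := maxD' _ B'A B'k; rewrite e1 e2 lerD2r !p'E // in h1.
    have h2 := maxD _ BA Bk; rewrite e3 e4 lerD2r in h2.
    have heq : w x - p x = w y - p y by apply/eqP; rewrite eq_le h1 h2.
    have BM : x |: (D :\ y) \in maximizers I t p.
      apply: maximI => // C CA; apply: le_trans (maxim_le (dem_max I t p) CA) _.
      by rewrite !util_small // e3 e4 heq.
    have B'M : y |: (D' :\ x) \in maximizers I t p'.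
      apply: maximI => // C CA; apply: le_trans (maxim_le (dem_max I t p') CA) _.
      by rewrite !util_small // e1 e2 !p'E // heq.
    case: (ltngtP x y) => [xy|yx|/val_inj xy].
    + have := lexle_anti (lexle_swap xD' yD' xy) (dem_lex B'M).
      by move/setP/(_ y); rewrite !inE eqxx (negbTE yD').
    + have := lexle_anti (lexle_swap yD xD yx) (dem_lex BM).
      by move/setP/(_ x); rewrite !inE eqxx (negbTE xD).
    + by subst x; rewrite yD in xD.
have claim2 : (#|D' :\: D| <= #|D :\: D'|)%N.
  rewrite leqNgt; apply/negP => H.
  have hc : (#|D| < #|D'|)%N.
    rewrite -(cardsID D' D) -(cardsID D D') setIC.
    by rewrite ltn_add2l.
  have /set0Pn [x] : D' :\: D != set0.
    by rewrite -card_gt0; apply: leq_ltn_trans H.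
  rewrite inE => /andP[xD xD'].
  have xA : x \in act I t := subsetP D'A x xD'.
  have BA : x |: D \subset act I t by rewrite subUset sub1set xA DA.
  have Bk : (#|x |: D| <= k)%N by rewrite cardsU1 xD add1n; apply: leq_trans hc D'k.
  have := maxD _ BA Bk; rewrite /U (big_setU1 _ xD) /= gerDr leNgt.
  by rewrite -p'E ?uD' // D'Z.
apply: leq_trans claim2 _; apply: subset_leq_card; apply/subsetP => y.
rewrite !inE => /andP[yD' yD]; rewrite yD /=.
by apply: contraNT yD' => yZ; apply: claim1.
Qed.

End KDem.


Section Orc.
Variable R : realType.
Variable N : nat.
Variables M T : nat.

Definition Om := {ffun 'I_T.+1 -> 'I_M.+1}.
Definition pause (om : Om) (t : nat) : bool := om (inord t) == ord0.

Definition tau (I : instance R N) (g : policy R N) (t : nat) : state N :=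
  state_at I (policy_rule I g) 1 (init I) t.

Definition oprice (I : instance R N) (g : policy R N) (om : Om) (t : nat)
  (s : state N) : price R N :=
  fun i => if pause om t then 1 else if s i == 0%N then 1 else g (act I t) (tau I g t) i.

Fixpoint ost (I : instance R N) (g : policy R N) (t0 : nat) (s0 : state N) (om : Om)
  (n : nat) : state N :=
  match n with
  | 0 => s0
  | n'.+1 => let s := ost I g t0 s0 om n' in
             Defs.next I (t0 + n') s (oprice I g om (t0 + n') s)
  end.

Definition orc : oracle R N Om :=
  fun g t0 s0 om t I => if t == 0%N then (fun _ => 1) else
                        oprice I g om t (ost I g t0 s0 om (t - t0)).

Lemma orcE g t0 s0 om t I : (0 < t)%N ->
  orc g t0 s0 om t I = oprice I g om t (ost I g t0 s0 om (t - t0)).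
Proof. by rewrite /orc; case: t. Qed.

Lemma traj_ost g t0 s0 om I : (0 < t0)%N -> forall n,
  traj I (oracle_rule orc g t0 s0 om I) t0 s0 n = ost I g t0 s0 om n.
Proof.
move=> t0p; elim=> [|n IH] //=.
rewrite IH /oracle_rule orcE ?addKn //.
by apply: leq_trans t0p (leq_addr _ _).
Qed.

Lemma oracle_stateE g t0 s0 om I t : (0 < t0)%N ->
  oracle_state orc g t0 s0 om I t = ost I g t0 s0 om (t - t0).
Proof. by move=> t0p; rewrite /oracle_state /state_at traj_ost. Qed.

Lemma tau_succ I g t : (0 < t)%N ->
  tau I g t.+1 = Defs.next I t (tau I g t) (g (act I t) (tau I g t)).
Proof.
case: t => // t _; rewrite /tau /state_at /= subn1 /=.
by rewrite /policy_rule add1n.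
Qed.

Lemma tau1 I g : tau I g 1 = init I.
Proof. by []. Qed.

Lemma ost_succ I g t0 s0 om t : (t0 <= t)%N ->
  ost I g t0 s0 om (t.+1 - t0) =
  Defs.next I t (ost I g t0 s0 om (t - t0)) (oprice I g om t (ost I g t0 s0 om (t - t0))).
Proof. by move=> h; rewrite subSn //= subnKC. Qed.

Definition agree (I I' : instance R N) (t : nat) : Prop :=
  [/\ forall s, (s <= t)%N -> act I s = act I' s,
      forall s, (s < t)%N -> Defs.next I s = Defs.next I' s &
      init I = init I'].

Lemma traj_agree I I' g t : agree I I' t -> forall n, (n <= t.-1)%N ->
  traj I (policy_rule I g) 1 (init I) n = traj I' (policy_rule I' g) 1 (init I') n.
Proof.
case=> Ha Hn Hi; elim=> [|n IH] h /=; first by [].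
rewrite IH; last by apply: ltnW.
have h1 : (1 + n < t)%N by rewrite -ltn_subRL subn1.
by rewrite /policy_rule Hn // Ha // ltnW.
Qed.

Lemma tau_agree I I' g t : agree I I' t -> forall s, (s <= t)%N ->
  tau I g s = tau I' g s.
Proof.
move=> H s st; rewrite /tau /state_at; apply: traj_agree H _ _.
by rewrite -subn1 leq_sub2r.
Qed.

Lemma oprice_agree I I' g om om' t s : agree I I' t -> pause om t = pause om' t ->
  oprice I g om t s = oprice I' g om' t s.
Proof.
move=> H hp; have [Ha _ _] := H.
by rewrite /oprice hp Ha // (tau_agree g H (leqnn t)).
Qed.

Lemma ost_agree I I' g t0 s0 om om' t : agree I I' t ->
  (forall s, (t0 <= s < t)%N -> pause om s = pause om' s) ->
  forall n, (n <= t - t0)%N -> ost I g t0 s0 om n = ost I' g t0 s0 om' n.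
Proof.
move=> H hp; have [Ha Hn _] := H; elim=> [|n IH] h //=.
rewrite IH ?(ltnW h) //.
have h1 : (t0 + n < t)%N by move: h; rewrite ltn_subRL.
rewrite Hn //; congr (Defs.next _ _ _ _).
apply: oprice_agree.
  case: H => Ha' Hn' Hi'; split => //.
  - by move=> s hs; apply: Ha'; apply: leq_trans hs (ltnW h1).
  - by move=> s hs; apply: Hn'; apply: ltn_trans hs h1.
by apply: hp; rewrite leq_addr h1.
Qed.

Lemma agree_le I I' t t' : agree I I' t -> (t' <= t)%N -> agree I I' t'.
Proof.
case=> Ha Hn Hi h; split => //.
- by move=> s hs; apply: Ha; apply: leq_trans hs h.
- by move=> s hs; apply: Hn; apply: leq_trans hs h.
Qed.

Lemma orc_agree I I' g t0 s0 om om' t : agree I I' t ->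
  (forall s, (t0 <= s < t)%N -> pause om s = pause om' s) ->
  pause om t = pause om' t ->
  orc g t0 s0 om t I = orc g t0 s0 om' t I'.
Proof.
move=> H hp ht; rewrite /orc; case: (t == 0%N) => //.
rewrite (@ost_agree I I' g t0 s0 om om' t H) //.
exact: oprice_agree.
Qed.

End Orc.


Section Online.
Variable R : realType.
Variable N : nat.
Variables M T : nat.

Lemma obs_agree (I I' : instance R N) t : (0 < t)%N -> obs_eq I I' t -> agree I I' t.
Proof.
move=> tp [Ha Hc Hn]; split => //.
- move=> s st; apply: functional_extensionality => st'.
  apply: functional_extensionality => p.
  by case: (Hn s st) => ->.
- apply: functional_extensionality => i; rewrite /init Ha //.
  case: ifP => // h; apply: Hc.
  move: h; rewrite -Ha // inE => /andP[h _]; exact: leq_trans h tp.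
Qed.

Lemma orc_online : online (@orc R N M T).
Proof.
move=> g t0 s0 om t I I' H; case: (posnP t) => [->|tp]; first by [].
exact: orc_agree (obs_agree tp H) (fun _ _ => erefl) erefl.
Qed.

Lemma dem_round (I I' : instance R N) s : round_eq I I' s -> forall p, dem I s p = dem I' s p.
Proof.
case=> Ha _ Hv p.
have HM : maximizers I s p = maximizers I' s p.
  apply/setP => A; rewrite !inE Ha; case AA: (A \subset act I' s) => //=.
  apply: eq_forallb => B; case BA: (B \subset act I' s) => //=.
  by rewrite /util !Hv // Ha.
by rewrite /dem HM.
Qed.


Lemma round_next (I I' : instance R N) s : round_eq I I' s -> round_eq I I' s.+1 ->
  Defs.next I s = Defs.next I' s.
Proof.
move=> H0 H1; have [Ha0 _ _] := H0; have [Ha1 Hc1 _] := H1.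
apply: functional_extensionality => st; apply: functional_extensionality => p.
apply: functional_extensionality => i.
rewrite /Defs.next (dem_round H0) Ha0 Ha1.
case: ifP => // h1; case: ifP => // h2.
apply: Hc1; move: h1 h2; rewrite -Ha0 -Ha1 !inE => /andP[a1 b1] /negbT.
rewrite negb_and -!ltnNge => /orP[h|h]; last by move: (ltn_trans h b1); rewrite ltnn.
by apply/eqP; rewrite eqn_leq a1 h.
Qed.

Lemma round_init (I I' : instance R N) : (forall i, 0 < ta I i)%N -> round_eq I I' 1 ->
  init I = init I'.
Proof.
move=> hta [Ha Hc _]; apply: functional_extensionality => i.
rewrite /init -Ha; case: ifP => // h; apply: Hc.
move: h; rewrite inE => /andP[h _]; apply/eqP; rewrite eqn_leq h; exact: hta.
Qed.

Lemma round_agree (I I' : instance R N) t : (forall i, 0 < ta I i)%N -> (0 < t)%N ->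
  (forall s, (s <= t)%N -> round_eq I I' s) -> agree I I' t.
Proof.
move=> hta tp H; split.
- by move=> s st; case: (H s st).
- by move=> s st; apply: round_next; apply: H => //; apply: ltnW.
- by apply: round_init => //; apply: H.
Qed.

Lemma coins_round (g : policy R N) t0 s0 (adv : Om M T -> instance R N) :
  (0 < t0)%N -> adaptive (@orc R N M T) g t0 s0 adv ->
  (forall om i, 0 < ta (adv om) i)%N ->
  forall t om om', (forall s, (t0 <= s < t)%N -> pause om s = pause om' s) ->
  forall s, (s <= t)%N -> round_eq (adv om) (adv om') s.
Proof.
move=> t0p Hadp hta; elim/ltn_ind => t IH om om' hp s st.
apply: Hadp => r /andP[r0 rs] i _.
have rt : (r < t)%N := leq_trans rs st.
have hpr : forall s, (t0 <= s < r)%N -> pause om s = pause om' s.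
  by move=> s' /andP[h1 h2]; apply: hp; rewrite h1 (ltn_trans h2 rt).
have Hag := round_agree (hta om) (leq_trans t0p r0) (IH r rt om om' hpr).
by rewrite (orc_agree g s0 Hag hpr) // hp // r0 rt.
Qed.

Definition sw (j : 'I_T.+1) (c : 'I_M.+1) (om : Om M T) : Om M T :=
  [ffun k => if k == j then tperm ord0 c (om k) else om k].

Lemma sw_invol j c : involutive (sw j c).
Proof.
move=> om; apply/ffunP => k; rewrite !ffunE.
by case: (k == j) => //; rewrite tpermK.
Qed.

Lemma indep (j : 'I_T.+1) (F : Om M T -> R) :
  (forall om om' : Om M T, (forall k, k != j -> om k = om' k) -> F om = F om') ->
  \sum_(om : Om M T) (om j == ord0)%:R * F om = (M.+1)%:R^-1 * \sum_(om : Om M T) F om.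
Proof.
move=> HF.
have Hc : forall c : 'I_M.+1, \sum_(om : Om M T) (om j == c)%:R * F om =
                             \sum_(om : Om M T) (om j == ord0)%:R * F om.
  move=> c; rewrite (reindex_inj (inv_inj (sw_invol j c))) /=.
  apply: eq_bigr => om _; rewrite ffunE eqxx.
  have -> : (tperm ord0 c (om j) == c) = (om j == ord0).
    apply/eqP/eqP => [h|->]; last exact: tpermL.
    by apply: (@perm_inj _ (tperm ord0 c)); rewrite h tpermL.
  congr (_ * _); apply: HF => k kj; rewrite ffunE (negbTE kj) //.
have -> : \sum_(om : Om M T) F om =
          \sum_(c : 'I_M.+1) \sum_(om : Om M T) (om j == c)%:R * F om.
  rewrite exchange_big /=; apply: eq_bigr => om _.
  rewrite (bigD1 (om j)) //= eqxx mul1r big1 ?addr0 // => c.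
  by rewrite eq_sym => /negbTE ->; rewrite mul0r.
rewrite (eq_bigr _ (fun c _ => Hc c)) sumr_const card_ord.
set S := (\sum_om _ * _); rewrite -[S *+ _]mulr_natr mulrCA mulVf ?mulr1 //.
by rewrite pnatr_eq0.
Qed.

End Online.


Lemma nat_step a b (d d' : bool) : (d -> 0 < a)%N -> (d' -> 0 < b)%N ->
  ((a - d) - (b - d') + (d && (b == 0)) <= (a - b) + (~~ d && d'))%N.
Proof. by case: d; case: d' => /= h1 h2; case: (eqVneq b 0%N) => hb /=; lia. Qed.

Lemma nat_step2 a b (d : bool) x : (d -> 0 < a)%N ->
  (0 + (d && (b == 0)) <= (a - b) + x)%N.
Proof. by case: d => /= h; case: (eqVneq b 0%N) => hb /=; lia. Qed.

Lemma nat_comb P P' h e (pz : bool) :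
  (P' + h <= P + e)%N -> (pz -> e = 0)%N -> (~~ pz -> e <= h)%N ->
  (P' + (pz && (0 < h)) <= P)%N.
Proof. by case: pz => /= H1 H2 H3; [move: (H2 erefl) => he; lia | move: (H3 erefl); lia]. Qed.

Lemma sum_in_card N (A : {set 'I_N}) : (\sum_(i : 'I_N) (i \in A) = #|A|)%N.
Proof.
rewrite -sum1_card [RHS]big_mkcond /=; apply: eq_bigr => i _; by case: (i \in A).
Qed.

Section Round.
Variable R : realType.
Variable N : nat.
Variables M T C W : nat.
Variable g : policy R N.
Variables (t0 : nat) (s0 : state N).
Variable I : instance R N.
Variable om : Om M T.
Hypothesis gfeas : feasible_policy g.
Hypothesis Ivalid : valid_instance C W T I.
Hypothesis t0p : (0 < t0)%N.

Definition ptar t := g (act I t) (tau I g t).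
Definition osig t := ost I g t0 s0 om (t - t0).
Definition qor t := oprice I g om t (osig t).
Definition Zs t := [set i | osig t i == 0%N].
Definition hitn t := #|dem I t (ptar t) :&: Zs t|.
Definition Phi t := (\sum_(i : 'I_N) (tau I g t i - osig t i))%N.

Lemma ptar_feas t i : i \in act I t -> 0 < ptar t i <= 1 /\ (tau I g t i = 0%N -> ptar t i = 1).
Proof. by move=> iA; apply: gfeas. Qed.

Lemma qor_feas t i : i \in act I t -> 0 < qor t i <= 1 /\ (osig t i = 0%N -> qor t i = 1).
Proof.
move=> iA; rewrite /qor /oprice; case: (pause om t) => /=.
  by split => //; rewrite ltr01 lexx.
case: eqP => [->|hne]; first by split => //; rewrite ltr01 lexx.
by case: (ptar_feas iA) => h1 _; split => // h; exfalso; apply: hne.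
Qed.

Section AtT.
Variable t : nat.
Hypothesis tT : (1 <= t <= T)%N.


Lemma val0t : Defs.val I t set0 = 0.
Proof. by case: Ivalid => _ _ _ H _; case: (H t tT). Qed.
Lemma valrt : forall A : {set 'I_N}, A \subset act I t -> 0 <= Defs.val I t A < 1.
Proof. by case: Ivalid => _ _ _ H _; case: (H t tT). Qed.

Lemma ptar_ge0 : forall i, i \in act I t -> 0 <= ptar t i.
Proof. by move=> i iA; case: (ptar_feas iA) => /andP[h _] _; apply: ltW. Qed.
Lemma qor_ge0 : forall i, i \in act I t -> 0 <= qor t i.
Proof. by move=> i iA; case: (qor_feas iA) => /andP[h _] _; apply: ltW. Qed.

Lemma qor_np : ~~ pause om t -> qor t = (fun i => if i \in Zs t then 1%R else ptar t i).
Proof.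
move=> np; apply: functional_extensionality => i.
by rewrite /qor /oprice (negbTE np) inE.
Qed.

Lemma loss_round :
  target_reward I g t - pay I t (qor t) <= (pause om t || (0 < hitn t)%N)%:R.
Proof.
have -> : target_reward I g t = pay I t (ptar t) by [].
case hb: (pause om t || (0 < hitn t)%N).
  have h1 := pay_lt1 val0t valrt (ptar t).
  have h2 := pay_ge0 qor_ge0.
  rewrite /= (_ : (true : nat)%:R = 1 :> R) //; lra.
move/negbT: hb; rewrite negb_or => /andP[np nh].
have hZ : forall i, i \in dem I t (ptar t) -> i \notin Zs t.
  move=> i iD; apply/negP => iZ; move/negP: nh; apply.
  by rewrite /hitn card_gt0; apply/set0Pn; exists i; rewrite inE iD iZ.
have Hd : dem I t (qor t) = dem I t (ptar t).
  rewrite qor_np //; apply: dem_raise.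
    move=> i iA; case: (i \in Zs t) => //.
    by case: (ptar_feas iA) => /andP[_ ->].
  by move=> i iD; rewrite (negbTE (hZ i iD)).
rewrite /pay Hd.
have -> : \sum_(i in dem I t (ptar t)) qor t i = \sum_(i in dem I t (ptar t)) ptar t i.
  by apply: eq_bigr => i iD; rewrite qor_np // (negbTE (hZ i iD)).
by rewrite subrr.
Qed.

Lemma phi_round : (t0 <= t)%N ->
  (Phi t.+1 + (pause om t && (0 < hitn t)%N) <= Phi t)%N.
Proof.
move=> t0t.
have t1 : (0 < t)%N by case/andP: tT.
have eT : tau I g t.+1 = Defs.next I t (tau I g t) (ptar t) := tau_succ I g t1.
have eS : osig t.+1 = Defs.next I t (osig t) (qor t) := ost_succ I g s0 om t0t.
set D := dem I t (ptar t); set D' := dem I t (qor t).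
have Dsub : D \subset act I t := dem_sub I t _.
have D'sub : D' \subset act I t := dem_sub I t _.
have hD : forall i, i \in D -> (0 < tau I g t i)%N.
  move=> i iD; rewrite lt0n; apply/eqP => h0.
  have := dem_lt1 val0t valrt ptar_ge0 iD.
  by case: (ptar_feas (subsetP Dsub i iD)) => _ /(_ h0) ->; rewrite ltxx.
have hD' : forall i, i \in D' -> (0 < osig t i)%N.
  move=> i iD; rewrite lt0n; apply/eqP => h0.
  have := dem_lt1 val0t valrt qor_ge0 iD.
  by case: (qor_feas (subsetP D'sub i iD)) => _ /(_ h0) ->; rewrite ltxx.
have key : (Phi t.+1 + #|D :&: Zs t| <= Phi t + #|D' :\: D|)%N.
  rewrite /Phi -!sum_in_card -!big_split /=; apply: leq_sum => i _.
  rewrite eT eS /Defs.next in_setI in_setD [i \in Zs t]inE.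
  case: ifP => h1; last by rewrite sub0n; apply: nat_step2; move/hD.
  case: ifP => h2.
  - by rewrite -/D -/D'; apply: nat_step; [move/hD | move/hD'].
  - have iD : (i \in D) = false by apply: negbTE; apply: contraFN h2; apply: (subsetP Dsub).
    by rewrite iD subnn.
apply: (nat_comb key).
  move=> pz; apply/eqP; rewrite cards_eq0; apply/eqP/setP => i; rewrite inE in_set0.
  apply/negP => /andP[_ iD']; have := dem_lt1 val0t valrt qor_ge0 iD'.
  by rewrite /qor /oprice pz ltxx.
move=> np; case: Ivalid => _ _ _ _ /(_ t tT) [k [w [_ hw hval]]].
rewrite /D' qor_np //; apply: (dem_GS hw hval).
by move=> i iA; case: (ptar_feas iA) => /andP[].
Qed.

End AtT.
Lemma tau_inv t : (0 < t)%N -> forall i,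
  (tau I g t i <= C)%N /\ (i \notin act I t -> tau I g t i = 0%N).
Proof.
have capC : forall i, (cap I i <= C)%N by move=> i; case: Ivalid => _ /(_ i) /andP[].
elim: t => [//|t IH] _ i; case: (posnP t) => [->|tp].
  by rewrite tau1 /init; case: ifP => h; split => //; rewrite h.
rewrite (tau_succ I g tp) /Defs.next; case: ifP => h1; last by split.
split => //; case: ifP => h2 //.
by apply: leq_trans (leq_subr _ _) _; case: (IH tp i).
Qed.

Lemma phi_t0 : (Phi t0 <= C * W)%N.
Proof.
have cW : (#|act I t0| <= W)%N by case: Ivalid => _ _ /(_ t0).
apply: (@leq_trans (\sum_(i : 'I_N) tau I g t0 i)).
  by apply: leq_sum => i _; apply: leq_subr.
have -> : (\sum_(i : 'I_N) tau I g t0 i = \sum_(i in act I t0) tau I g t0 i)%N.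
  rewrite [RHS]big_mkcond /=; apply: eq_bigr => i _; case: ifP => // h.
  by case: (tau_inv t0p i) => _ ->; rewrite ?h.
apply: (@leq_trans (\sum_(i in act I t0) C)).
  by apply: leq_sum => i _; case: (tau_inv t0p i).
by rewrite sum_nat_const mulnC leq_mul2l cW orbT.
Qed.

End Round.

Lemma telesc (f b : nat -> nat) a n :
  (forall t, (a <= t < a + n)%N -> (f t.+1 + b t <= f t)%N) ->
  (\sum_(a <= t < a + n) b t + f (a + n) <= f a)%N.
Proof.
elim: n => [|n IH] H; first by rewrite addn0 big_geq.
rewrite addnS big_nat_recr /=; last by apply: leq_addr.
have h1 := H (a + n); rewrite leq_addr /= addnS ltnS leqnn in h1.
have h2 : (\sum_(a <= t < a + n) b t + f (a + n) <= f a)%N.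
  by apply: IH => t /andP[t1 t2]; apply: H; rewrite t1 /= addnS ltnS ltnW.
apply: leq_trans h2; rewrite -addnA leq_add2l addnC; exact: h1.
Qed.


Lemma sqrt_facts (a M : nat) : M = Nat.sqrt a -> (M * M <= a < M.+1 * M.+1)%N.
Proof.
move=> ->; have [h1 h2] := Nat.sqrt_spec a (Nat.le_0_l a).
apply/andP; split; [apply/ssrnat.leP; exact: h1 | apply/ssrnat.ltP; exact: h2].
Qed.

Lemma M_facts (C W T M : nat) : (0 < C * W)%N -> M = Nat.sqrt (T %/ (C * W)) ->
  (M * M * (C * W) <= T /\ T <= M.+1 * M.+1 * (C * W))%N.
Proof.
move=> cw hM; have /andP[h1 h2] := sqrt_facts hM.
split.
  apply: leq_trans (leq_trunc_div T (C * W)); by rewrite leq_mul2r h1 orbT.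
have hT := divn_eq T (C * W); have hm := ltn_pmod T cw.
apply: (@leq_trans ((T %/ (C * W)).+1 * (C * W))); last by rewrite leq_mul2r h2 orbT.
by rewrite mulSn {1}hT addnC leq_add2r ltnW.
Qed.

Section Arith.
Variable R : realType.

Lemma le_sqrt_of_sq (x y : R) : 0 <= x -> 0 <= y -> x ^+ 2 <= y -> x <= Num.sqrt y.
Proof.
move=> hx hy h; have -> : x = Num.sqrt (x ^+ 2) by rewrite sqrtr_sqr ger0_norm.
by rewrite ler_sqrt.
Qed.

Lemma le_of_sq (x z : R) : 0 <= x -> 0 <= z -> x ^+ 2 <= z ^+ 2 -> x <= z.
Proof.
move=> hx hz h; have -> : z = Num.sqrt (z ^+ 2) by rewrite sqrtr_sqr ger0_norm.
by apply: le_sqrt_of_sq => //; rewrite sqr_ge0.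
Qed.

Lemma final_arith (C W T M : nat) (E : R) : (0 < C * W)%N ->
  M = Nat.sqrt (T %/ (C * W)) ->
  E <= T%:R -> E <= T%:R / (M.+1)%:R + (M.+1)%:R * (C * W)%:R ->
  E <= 3%:R * Num.sqrt (C%:R * W%:R * T%:R).
Proof.
move=> cw hM hE1 hE2.
have [f1 f2] := M_facts cw hM.
set s := Num.sqrt (C%:R * W%:R * T%:R : R).
have s0 : 0 <= s by apply: sqrtr_ge0.
have hcwt : 0 <= C%:R * W%:R * T%:R :> R by rewrite -!natrM ler0n.
have ss : s ^+ 2 = C%:R * W%:R * T%:R by rewrite sqr_sqrtr.
case: (leqP T (C * W)) => hT.
  have : T%:R <= s.
    apply: le_sqrt_of_sq => //; rewrite expr2 -!natrM ler_nat.
    by rewrite [X in (_ <= X)%N]mulnC leq_mul2l hT orbT.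
  move=> h; apply: le_trans hE1 _; apply: le_trans h _.
  have -> : (3%:R : R) * s = s + s + s by rewrite (natrD _ 2 1) mulrDl mul1r (natrD _ 1 1) mulrDl mul1r.
  lra.
have h1 : T%:R / (M.+1)%:R <= s.
  rewrite ler_pdivrMr ?ltr0n //.
  apply: le_of_sq => //; first by rewrite mulr_ge0 ?ler0n.
  rewrite exprMn ss -!natrX -!natrM ler_nat.
  have := leq_mul (leqnn T) f2.
  rewrite !expnS !expn0 !muln1.
  have -> : (C * W * T * (M.+1 * M.+1) = T * (M.+1 * M.+1 * (C * W)))%N by nia.
  by [].
have h2 : (M%:R * (C * W)%:R : R) <= s.
  apply: le_sqrt_of_sq => //; first by rewrite mulr_ge0 ?ler0n.
  rewrite exprMn -!natrX -!natrM ler_nat.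
  have := leq_mul f1 (leqnn (C * W)).
  rewrite !expnS !expn0 !muln1.
  have -> : (M * M * ((C * W) * (C * W)) = M * M * (C * W) * (C * W))%N by nia.
  by have -> : (C * W * T = T * (C * W))%N by nia.
have h3 : ((C * W)%:R : R) <= s.
  apply: le_sqrt_of_sq; rewrite ?ler0n //.
  rewrite -!natrX -!natrM ler_nat expnS expn1.
  have -> : (C * W * T = T * (C * W))%N by nia.
  by rewrite leq_mul2r ltnW ?orbT.
have e : ((M.+1)%:R * (C * W)%:R : R) = M%:R * (C * W)%:R + (C * W)%:R.
  by rewrite -natr1 mulrDl mul1r.
rewrite e in hE2; apply: le_trans hE2 _.
have -> : (3%:R : R) * s = s + s + s by rewrite (natrD _ 2 1) mulrDl mul1r (natrD _ 1 1) mulrDl mul1r.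
by rewrite addrA; apply: lerD => //; apply: lerD.
Qed.
End Arith.


Lemma hitn_agree (R : realType) N M T (g : policy R N) t0 s0 (I I' : instance R N)
  (om om' : Om M T) t :
  agree I I' t -> round_eq I I' t ->
  (forall s, (t0 <= s < t)%N -> pause om s = pause om' s) ->
  hitn g t0 s0 I om t = hitn g t0 s0 I' om' t.
Proof.
move=> H Hr hp; have [Ha _ _] := H.
rewrite /hitn /ptar /Zs /osig (tau_agree g H (leqnn t)) Ha // (dem_round Hr).
by rewrite (ost_agree g s0 H hp (leqnn _)).
Qed.

Lemma pause_inord M T (om om' : Om M T) t s :
  (forall k, k != inord t -> om k = om' k) -> (s < t <= T)%N -> pause om s = pause om' s.
Proof.
move=> H /andP[st tT].
have hs : (s < T.+1)%N by rewrite ltnS (leq_trans (ltnW st) tT).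
have ht : (t < T.+1)%N by rewrite ltnS.
rewrite /pause H //.
apply/negP => /eqP /(congr1 val); rewrite /= !inordK // => e.
by move: st; rewrite e ltnn.
Qed.

Theorem theorem1 :
  exists K : nat, forall (R : realType) (N C W T : nat),
  exists (Omega : finType) (w : Omega -> R) (orc : oracle R N Omega),
    [/\ (forall om, 0 <= w om), \sum_(om : Omega) w om = 1, online orc &
    forall (g : policy R N) (t0 : nat) (s0 : state N) (adv : Omega -> instance R N),
      feasible_policy g ->
      (1 <= t0 <= T)%N ->
      (forall om, valid_instance C W T (adv om)) ->
      (forall i, (s0 i <= C)%N) ->
      (forall om i, i \notin act (adv om) t0 -> s0 i = 0%N) ->
      adaptive orc g t0 s0 adv ->
      (forall om t, (t0 <= t <= T)%N ->
         feasible (act (adv om) t) (oracle_state orc g t0 s0 om (adv om) t)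
                  (orc g t0 s0 om t (adv om))) /\
      (forall tf, (t0 <= tf <= T)%N ->
         \sum_(om : Omega) w om *
           (\sum_(t0 <= t < tf.+1)
              (target_reward (adv om) g t - pay (adv om) t (orc g t0 s0 om t (adv om))))
         <= K%:R * Num.sqrt (C%:R * W%:R * T%:R))].
Proof.
exists 3%N => R N C W T.
set M := Nat.sqrt (T %/ (C * W)).
have cardpos : (0 < #|Om M T|)%N by apply/card_gt0P; exists [ffun => ord0].
set c : R := (#|Om M T|%:R)^-1.
have cpos : 0 <= c by rewrite invr_ge0 ler0n.
have cardc : #|Om M T|%:R * c = 1 by rewrite mulfV // pnatr_eq0 -lt0n.
have sumc : \sum_(om : Om M T) c = 1 by rewrite sumr_const -mulr_natl.
exists (Om M T), (fun _ => c), (@orc R N M T); split => //.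
- exact: orc_online.
move=> g t0 s0 adv gfeas /andP[t0p t0T] Hval Hs0 Hs0' Hadp.
have hta : forall om i, (0 < ta (adv om) i)%N.
  by move=> om i; case: (Hval om) => /(_ i) [h _ _].
split.
  move=> om t /andP[t0t tT] i iA.
  have tp : (0 < t)%N := leq_trans t0p t0t.
  rewrite oracle_stateE // orcE //.
  exact: (qor_feas t0 s0 om gfeas iA).
move=> tf /andP[t0tf tfT].
set r := (tf.+1 - t0)%N.
have rT : (r <= T)%N by rewrite /r leq_subLR addnC -addn1 leq_add.
set m : R := (M.+1)%:R.
have m0 : m != 0 by rewrite pnatr_eq0.
set L := fun om : Om M T => \sum_(t0 <= t < tf.+1)
   (target_reward (adv om) g t - pay (adv om) t (orc g t0 s0 om t (adv om))).
pose pz (om : Om M T) t : R := (pause om t)%:R.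
pose hz (om : Om M T) t : R := ((0 < hitn g t0 s0 (adv om) om t)%N)%:R.
have rng : forall t, (t0 <= t < tf.+1)%N -> (0 < t)%N /\ (1 <= t <= T)%N.
  move=> t /andP[h1 h2]; have tp : (0 < t)%N := leq_trans t0p h1.
  by split => //; rewrite tp /= (leq_trans _ tfT).
have Hround : forall om t, (t0 <= t < tf.+1)%N ->
    target_reward (adv om) g t - pay (adv om) t (orc g t0 s0 om t (adv om))
    <= (pause om t || (0 < hitn g t0 s0 (adv om) om t)%N)%:R.
  move=> om t ht; have [tp tT] := rng t ht.
  rewrite orcE //; exact: (loss_round t0 s0 om gfeas (Hval om) tT).
have HL1 : forall om, L om <= r%:R.
  move=> om; apply: le_trans (@ler_sum_nat _ _ _ _ (fun _ => 1) _) _.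
    move=> t ht; apply: le_trans (Hround om t ht) _.
    by case: (_ || _); rewrite ?ler01 ?lexx.
  by rewrite sumr_const_nat.
have HL2 : forall om, L om <= \sum_(t0 <= t < tf.+1) (pz om t + hz om t).
  move=> om; apply: ler_sum_nat => t ht; apply: le_trans (Hround om t ht) _.
  rewrite /pz /hz; case: (pause om t); case: (0 < _)%N => /=;
    rewrite ?addr0 ?add0r ?lexx ?ler01 //.
  by rewrite lerDl ler01.
have HB : forall om, (\sum_(t0 <= t < tf.+1) (pause om t && (0 < hitn g t0 s0 (adv om) om t)%N) <= C * W)%N.
  move=> om.
  have := @telesc (Phi g t0 s0 (adv om) om)
    (fun t => nat_of_bool (pause om t && (0 < hitn g t0 s0 (adv om) om t)%N)) t0 r.
  rewrite /r subnKC; last by apply: leq_trans t0tf _.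
  move=> H; have := H (fun t ht => phi_round s0 om gfeas (Hval om) (rng t ht).2 (proj1 (andP ht))).
  move=> h; apply: leq_trans (phi_t0 g s0 om (Hval om) t0p).
  by apply: leq_trans h; apply: leq_addr.
have Hpz : forall t, \sum_(om : Om M T) pz om t = m^-1 * #|Om M T|%:R.
  move=> t; have := @indep R M T (inord t) (fun _ => 1) (fun _ _ _ => erefl).
  under eq_bigr do rewrite mulr1.
  by rewrite sumr_const => <-.
have Hhz : forall t, (t0 <= t < tf.+1)%N ->
    \sum_(om : Om M T) hz om t = m * \sum_(om : Om M T) (pz om t * hz om t).
  move=> t ht; have [tp tT] := rng t ht; case/andP: tT => _ tT.
  have := @indep R M T (inord t) (fun om => hz om t).
  have Hinv : forall om om' : Om M T, (forall k, k != inord t -> om k = om' k) ->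
      hz om t = hz om' t.
    move=> om om' Hk.
    have hp : forall s, (t0 <= s < t)%N -> pause om s = pause om' s.
      by move=> s /andP[_ st]; apply: pause_inord Hk _; rewrite st tT.
    have Hr := coins_round t0p Hadp hta hp.
    have Hag := round_agree (hta om) tp Hr.
    by rewrite /hz (hitn_agree g s0 Hag (Hr t (leqnn t)) hp).
  move=> /(_ Hinv) e; rewrite /pz /pause e mulrA mulfV // mul1r.
  by [].
have S1 : \sum_(t0 <= t < tf.+1) \sum_(om : Om M T) pz om t = r%:R * (m^-1 * #|Om M T|%:R).
  by rewrite (eq_bigr _ (fun t _ => Hpz t)) sumr_const_nat mulr_natl.
have S2 : \sum_(t0 <= t < tf.+1) \sum_(om : Om M T) hz om t <= m * (#|Om M T|%:R * (C * W)%:R).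
  rewrite (eq_big_nat _ _ Hhz) -mulr_sumr; apply: ler_wpM2l; first by rewrite ler0n.
  rewrite exchange_big /=.
  apply: (@le_trans _ _ (\sum_(om : Om M T) (C * W)%:R)); last by rewrite sumr_const mulr_natl.
  apply: ler_sum => om _.
  have -> : \sum_(t0 <= t < tf.+1) pz om t * hz om t =
            (\sum_(t0 <= t < tf.+1) (pause om t && (0 < hitn g t0 s0 (adv om) om t)%N : nat))%:R.
    by rewrite natr_sum; apply: eq_bigr => t _; rewrite /pz /hz -natrM mulnb.
  by rewrite ler_nat HB.
have HE : \sum_(om : Om M T) c * L om <= r%:R / m + m * (C * W)%:R.
  apply: (@le_trans _ _ (\sum_(om : Om M T) c * \sum_(t0 <= t < tf.+1) (pz om t + hz om t))).
    by apply: ler_sum => om _; apply: ler_wpM2l => //; apply: HL2.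
  rewrite -mulr_sumr exchange_big /=.
  rewrite (eq_bigr _ (fun t _ => big_split _ _ _ _ _)) /= big_split /= S1.
  apply: le_trans (ler_wpM2l cpos (lerD (lexx _) S2)) _.
  rewrite mulrDr; apply: lerD.
    have -> : c * (r%:R * (m^-1 * #|Om M T|%:R)) = r%:R / m * (#|Om M T|%:R * c) by ring.
    by rewrite cardc mulr1.
  have -> : c * (m * (#|Om M T|%:R * (C * W)%:R)) = m * (C * W)%:R * (#|Om M T|%:R * c) by ring.
  by rewrite cardc mulr1.
have cw : (0 < C * W)%N.
  pose om0 : Om M T := [ffun => ord0].
  case: (Hval om0) => _ Hcap Hcard _ /(_ t0) [|k [w [/andP[k1 kA] _ _]]].
    by rewrite t0p t0T.
  have : (0 < #|act (adv om0) t0|)%N by apply: leq_trans k1 kA.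
  case/card_gt0P => i iA.
  have c0 : (0 < C)%N by case/andP: (Hcap i) => h1 h2; apply: leq_trans h1 h2.
  have w0 : (0 < W)%N by apply: leq_trans (leq_trans k1 kA) (Hcard t0).
  by rewrite muln_gt0 c0 w0.
apply: (final_arith cw (erefl M)).
  apply: (@le_trans _ _ (\sum_(om : Om M T) c * r%:R)).
    by apply: ler_sum => om _; apply: ler_wpM2l => //; apply: HL1.
  by rewrite -mulr_suml sumc mul1r ler_nat.
apply: le_trans HE _; apply: lerD => //.
by apply: ler_wpM2r; [rewrite invr_ge0 ler0n | rewrite ler_nat].
Qed.
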